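(* Let $P_n(x)$ be a real polynomial all of whose roots are real, with distinct roots $p_1<\dots<p_m$ of multiplicities $r_1,\dots,r_m$. Then $$Z=\sum_{1\le i<j\le m}\frac{r_j^{-1}-r_i^{-1}}{p_j-p_i}$$ is a rational function of the coefficients of $P_n(x)$. *)

(* Defs.v *)
From HB Require Import structures.
From mathcomp Require Import all_boot all_order all_algebra.
From mathcomp Require Import reals.
From mathcomp Require Import mpoly.
Set Implicit Arguments. Unset Strict Implicit. Unset Printing Implicit Defensive.
Import Order.TTheory GRing.Theory Num.Theory.
Local Open Scope ring_scope.

Definition Zsum (R : realType) (p : seq R) (r : seq nat) : R :=
  \sum_(i < size p) \sum_(j < size p | (i < j)%N)
     (((nth 0%N r j)%:R)^-1 - ((nth 0%N r i)%:R)^-1) / (p`_j - p`_i).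

Definition coefvec (R : realType) (n : nat) (P : {poly R}) : 'I_n.+1 -> R :=
  fun i => P`_i.
Arguments coefvec {R} n P i.

(* Main.v *)
Require Import Defs.
From HB Require Import structures.
From mathcomp Require Import all_boot all_order all_algebra.
From mathcomp Require Import reals.
From mathcomp Require Import mpoly.
From mathcomp Require Import ring lra.
Import Order.TTheory GRing.Theory Num.Theory.
Local Open Scope ring_scope.

Set Implicit Arguments. Unset Strict Implicit. Unset Printing Implicit Defensive.

Section Frame.
Variables (R : realFieldType) (k : nat) (T : Type) (valid : T -> Prop)
  (cv : T -> 'I_k -> R).

Definition RatOn (f : T -> R) := exists N D : {mpoly R[k]},
  forall x, valid x -> D.@[cv x] != 0 /\ f x = N.@[cv x] / D.@[cv x].

Lemma rat_ext f g : RatOn f -> (forall x, valid x -> f x = g x) -> RatOn g.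
Proof.
move=> [N [D H]] E; exists N, D => x vx; have [H1 H2] := H x vx.
by split => //; rewrite -E.
Qed.

Lemma rat_cst c : RatOn (fun _ => c).
Proof. exists c%:MP, 1 => x _; rewrite meval1 mevalC oner_neq0 divr1; by split. Qed.

Lemma rat_var i : RatOn (fun x => cv x i).
Proof. exists 'X_i, 1 => x _; rewrite meval1 mevalXU oner_neq0 divr1; by split. Qed.

Lemma rat_add f g : RatOn f -> RatOn g -> RatOn (fun x => f x + g x).
Proof.
move=> [N1 [D1 H1]] [N2 [D2 H2]]; exists (N1 * D2 + N2 * D1), (D1 * D2) => x vx.
have [d1 e1] := H1 x vx; have [d2 e2] := H2 x vx.
rewrite !mevalM mevalD !mevalM mulf_neq0 //; split => //.
by rewrite e1 e2; field; rewrite d1 d2.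
Qed.

Lemma rat_mul f g : RatOn f -> RatOn g -> RatOn (fun x => f x * g x).
Proof.
move=> [N1 [D1 H1]] [N2 [D2 H2]]; exists (N1 * N2), (D1 * D2) => x vx.
have [d1 e1] := H1 x vx; have [d2 e2] := H2 x vx.
rewrite !mevalM mulf_neq0 //; split => //.
by rewrite e1 e2; field; rewrite d1 d2.
Qed.

Lemma rat_opp f : RatOn f -> RatOn (fun x => - f x).
Proof.
move=> [N1 [D1 H1]]; exists (- N1), D1 => x vx.
have [d1 e1] := H1 x vx; rewrite mevalN e1; split => //; by rewrite mulNr.
Qed.

Lemma rat_inv f : RatOn f -> (forall x, valid x -> f x != 0) ->
  RatOn (fun x => (f x)^-1).
Proof.
move=> [N1 [D1 H1]] nz; exists D1, N1 => x vx.
have [d1 e1] := H1 x vx; have := nz x vx; rewrite e1 => hn.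
have n1 : N1.@[cv x] != 0 by apply: contraNneq hn => ->; rewrite mul0r.
split => //; by rewrite invf_div.
Qed.

Lemma rat_sum (I : Type) (s : seq I) (Pr : pred I) (F : I -> T -> R) :
  (forall i, RatOn (F i)) -> RatOn (fun x => \sum_(i <- s | Pr i) F i x).
Proof.
move=> HF; elim: s => [|i s IH].
  by apply: rat_ext (rat_cst 0) _ => x _; rewrite big_nil.
case: (boolP (Pr i)) => Pi.
  by apply: rat_ext (rat_add (HF i) IH) _ => x _; rewrite big_cons Pi.
by apply: rat_ext IH _ => x _; rewrite big_cons (negbTE Pi).
Qed.

Lemma rat_prod (I : Type) (s : seq I) (Pr : pred I) (F : I -> T -> R) :
  (forall i, RatOn (F i)) -> RatOn (fun x => \prod_(i <- s | Pr i) F i x).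
Proof.
move=> HF; elim: s => [|i s IH].
  by apply: rat_ext (rat_cst 1) _ => x _; rewrite big_nil.
case: (boolP (Pr i)) => Pi.
  by apply: rat_ext (rat_mul (HF i) IH) _ => x _; rewrite big_cons Pi.
by apply: rat_ext IH _ => x _; rewrite big_cons (negbTE Pi).
Qed.

Lemma rat_exp f e : RatOn f -> RatOn (fun x => f x ^+ e).
Proof.
move=> Hf; elim: e => [|e IH]; first by apply: rat_ext (rat_cst 1) _ => x _.
by apply: rat_ext (rat_mul Hf IH) _ => x _; rewrite exprS.
Qed.

Lemma rat_det m (A : T -> 'M[R]_m) : (forall i j, RatOn (fun x => A x i j)) ->
  RatOn (fun x => \det (A x)).
Proof.
move=> HA; apply: rat_sum => s; apply: rat_mul; first exact: rat_cst.
by apply: rat_prod => i; apply: HA.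
Qed.

Lemma rat_solve m l (M : T -> 'M[R]_(m, l)) (b : T -> 'rV[R]_l) (u : T -> 'rV[R]_m) :
  (forall i j, RatOn (fun x => M x i j)) -> (forall j, RatOn (fun x => b x ord0 j)) ->
  (forall x, valid x -> u x *m M x = b x) ->
  (forall x, valid x -> forall v : 'rV[R]_m, v *m M x = 0 -> v = 0) ->
  forall i, RatOn (fun x => u x ord0 i).
Proof.
move=> HM Hb Hu Hinj i.
pose A x : 'M[R]_m := M x *m (M x)^T.
have HMT : forall i j, RatOn (fun x => (M x)^T i j).
  by move=> i1 j1; apply: rat_ext (HM j1 i1) _ => x _; rewrite mxE.
have HA : forall i j, RatOn (fun x => A x i j).
  move=> i1 j1; apply: rat_ext (@rat_sum 'I_l (index_enum 'I_l) xpredT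
     (fun j x => M x i1 j * (M x)^T j j1) _) _.
    by move=> j; apply: rat_mul => //.
  by move=> x _; rewrite mxE.
have detA : forall x, valid x -> \det (A x) != 0.
  move=> x vx; apply/negP => /det0P [v vn0 vA].
  have w0 : v *m M x = 0.
    set w := v *m M x.
    have ww : w *m w^T = 0 by rewrite /w trmx_mul mulmxA -(mulmxA v) vA mul0mx.
    have : (w *m w^T) 0 0 = 0 by rewrite ww mxE.
    rewrite mxE => /psumr_eq0P H0.
    have H0' : forall c, w 0 c * w^T c 0 = 0.
      by move=> c; apply: H0 => // j _; rewrite !mxE -expr2 sqr_ge0.
    have H1 : forall c, w 0 c = 0.
      move=> c; have := H0' c; rewrite [w^T _ _]mxE => /eqP; rewrite mulf_eq0 orbb => /eqP ->. done.
    by apply/matrixP => a c; rewrite [a]ord1 [RHS]mxE; apply: H1.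
  by move: vn0; rewrite (Hinj x vx v w0) eqxx.
have uE : forall x, valid x -> u x = b x *m (M x)^T *m invmx (A x).
  move=> x vx; have uA : A x \in unitmx by rewrite unitmxE unitfE detA.
  by rewrite -(mulmxK uA (u x)) /A mulmxA Hu.
have HB : forall j, RatOn (fun x => (b x *m (M x)^T) ord0 j).
  move=> j; apply: rat_ext (@rat_sum 'I_l (index_enum 'I_l) xpredT
     (fun a x => b x ord0 a * (M x)^T a j) _) _.
    by move=> a; apply: rat_mul => //.
  by move=> x _; rewrite mxE.
apply: rat_ext (@rat_sum 'I_m (index_enum 'I_m) xpredT
  (fun j x => (b x *m (M x)^T) ord0 j * ((\det (A x))^-1 *
      ((-1) ^+ (i + j) * \det (row' i (col' j (A x)))))) _) _.
  move=> j; apply: rat_mul => //; apply: rat_mul.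
    by apply: rat_inv => //; apply: rat_det.
  apply: rat_mul; first exact: rat_cst.
  by apply: rat_det => a c; rewrite /=; apply: rat_ext (HA _ _) _ => x _; rewrite !mxE.
move=> x vx; rewrite (uE x vx) mxE; apply: eq_bigr => j _.
have uA : A x \in unitmx by rewrite unitmxE unitfE detA.
by rewrite /invmx uA !mxE.
Qed.
End Frame.

Section P1.
Variable R : realFieldType.

Lemma LD (I : Type) (s : seq I) (Pr : pred I) (a : I -> R) (e : I -> nat) (x : R) :
  (forall i, Pr i -> x != a i) ->
  (\prod_(i <- s | Pr i) ('X - (a i)%:P) ^+ e i)^`().[x] =
  (\prod_(i <- s | Pr i) ('X - (a i)%:P) ^+ e i).[x] *
     \sum_(i <- s | Pr i) (e i)%:R / (x - a i).
Proof.
move=> Hx; elim: s => [|i s IH].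
  by rewrite !big_nil -polyC1 derivC horner0 mulr0.
rewrite !big_cons; case: (boolP (Pr i)) => Pi //.
rewrite derivM deriv_exp derivXsubC mul1r !hornerE hornerMn !hornerE IH.
have yn0 : x - a i != 0 by rewrite subr_eq0 Hx.
set y := x - a i; set F := _.[x]; set S := \sum_(_ <- _ | _) _.
case: (e i) => [|k] /=; first by rewrite mulr0n !mul0r add0r expr0 !mul1r add0r.
rewrite exprS -mulr_natr; field.
by rewrite /y.
Qed.

Lemma poly_eq0_large (q : {poly R}) (B : R) :
  (forall x, B < x -> q.[x] = 0) -> q = 0.
Proof.
move=> H.
apply: (@roots_geq_poly_eq0 _ q [seq B + 1 + i%:R | i <- iota 0 (size q)]).
- apply/allP => z /mapP [i _ ->]; apply/eqP/H.
  by rewrite -addrA ltrDl; apply: (lt_le_trans ltr01); rewrite lerDl.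
- rewrite map_inj_uniq ?iota_uniq // => i j /addrI /eqP; rewrite eqr_nat.
  by move/eqP.
- by rewrite size_map size_iota.
Qed.

Definition rpoly m (v : 'rV[R]_m) : {poly R} := \sum_(t < m) v ord0 t *: 'X^t.

Lemma coef_rpoly m (v : 'rV[R]_m) (t : 'I_m) : (rpoly v)`_t = v ord0 t.
Proof.
rewrite /rpoly coef_sum (bigD1 t) //= coefZ coefXn eqxx mulr1 big1 ?addr0 //.
by move=> i hi; rewrite coefZ coefXn (_ : (nat_of_ord t == i) = false) ?mulr0 //; apply/negbTE; rewrite eq_sym.
Qed.

Lemma size_rpoly m (v : 'rV[R]_m) : (size (rpoly v) <= m)%N.
Proof.
apply/leq_sizeP => j hj; rewrite /rpoly coef_sum big1 // => i _.
by rewrite coefZ coefXn; case: eqP => [e|]; [move: (ltn_ord i); rewrite -e ltnNge hj|rewrite mulr0].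
Qed.

Lemma rpoly_eq0 m (v : 'rV[R]_m) : rpoly v = 0 -> v = 0.
Proof.
move=> H; apply/matrixP => a t; rewrite [a]ord1 mxE -coef_rpoly H coef0 //.
Qed.

Lemma rowpoly m l (Q : {poly R}) (v : 'rV[R]_m) (k : 'I_l) :
  (v *m \matrix_(t < m, k < l) (Q * 'X^t)`_k) ord0 k = (Q * rpoly v)`_k.
Proof.
rewrite mxE /rpoly mulr_sumr coef_sum; apply: eq_bigr => t _.
by rewrite mxE -scalerAr coefZ.
Qed.

Lemma rpoly_coefs m (q : {poly R}) : (size q <= m)%N -> rpoly (\row_(t < m) q`_t) = q.
Proof.
move=> Hs; apply/polyP => i; rewrite /rpoly coef_sum.
case: (ltnP i m) => hi.
  rewrite (bigD1 (Ordinal hi)) //= coefZ coefXn eqxx mulr1 mxE big1 ?addr0 //.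
  move=> j /negPf; rewrite coefZ coefXn.
  have -> : (i == j) = (Ordinal hi == j) by [].
  by rewrite eq_sym => ->; rewrite mulr0.
move/leq_sizeP: Hs => ->//; rewrite big1 // => j _; rewrite coefZ coefXn.
by case: eqP => [e|]; [move: (ltn_ord j); rewrite -e ltnNge hi|rewrite mulr0].
Qed.

Lemma poly_trunc (q : {poly R}) m : (size q <= m)%N -> q = \poly_(t < m) q`_t.
Proof.
move=> Hs; apply/polyP => i; rewrite coef_poly; case: ltnP => // hi.
by move/leq_sizeP: Hs => ->.
Qed.

End P1.

Section Main.
Variables (R : realFieldType) (r : seq nat).
Hypothesis rpos : all (fun k => (0 < k)%N) r.
Local Notation m := (size r).

Definition sp (p : seq R) := \prod_(i < m) ('X - (p`_i)%:P).
Definition Kp (p : seq R) (j : 'I_m) := \prod_(i < m | i != j) ('X - (p`_i)%:P).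
Definition rr (j : 'I_m) : R := (nth 0%N r j)%:R.
Definition Hp p := \sum_(j < m) rr j *: Kp p j.

Lemma rr_nz j : rr j != 0.
Proof.
rewrite /rr pnatr_eq0 -lt0n; exact: (all_nthP 0%N rpos j (ltn_ord j)).
Qed.

Lemma sK p (j : 'I_m) : sp p = ('X - (p`_j)%:P) * Kp p j.
Proof. by rewrite /sp (bigD1 j). Qed.

Lemma sp_monic p : sp p \is monic.
Proof. exact: monic_prod_XsubC. Qed.

Lemma Kp_monic p (j : 'I_m) : Kp p j \is monic.
Proof. exact: monic_prod_XsubC. Qed.

Lemma size_sp p : size (sp p) = m.+1.
Proof. by rewrite /sp size_prod_XsubC /index_enum; unlock; rewrite -enumT size_enum_ord. Qed.

Lemma size_Kp p (j : 'I_m) : size (Kp p j) = m.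
Proof.
have := size_sp p; rewrite (sK p j) mulrC size_Mmonic ?monicXsubC ?monic_neq0 ?Kp_monic //.
by rewrite size_XsubC addn2 /= => [[]].
Qed.

Lemma sp_root p (j : 'I_m) : (sp p).[p`_j] = 0.
Proof. by rewrite (sK p j) hornerM hornerXsubC subrr mul0r. Qed.

Lemma Kp_root p (i j : 'I_m) : i != j -> (Kp p i).[p`_j] = 0.
Proof.
move=> ij; rewrite /Kp (bigD1 j) 1?eq_sym //= hornerM hornerXsubC subrr mul0r //.
Qed.

Variable p : seq R.
Hypothesis dist : forall i j : 'I_m, p`_i = p`_j -> i = j.

Lemma Kp_nz (j : 'I_m) : (Kp p j).[p`_j] != 0.
Proof.
rewrite /Kp horner_prod; apply/prodf_neq0 => i ij; rewrite hornerXsubC subr_eq0.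
by apply/eqP => /dist E; move: ij; rewrite E eqxx.
Qed.

Lemma Hp_at (j : 'I_m) : (Hp p).[p`_j] = rr j * (Kp p j).[p`_j].
Proof.
rewrite /Hp horner_sum (bigD1 j) //= hornerZ big1 ?addr0 // => i ij.
by rewrite hornerZ Kp_root ?mulr0.
Qed.

Lemma Hp_nz (j : 'I_m) : (Hp p).[p`_j] != 0.
Proof. by rewrite Hp_at mulf_neq0 ?rr_nz ?Kp_nz. Qed.

Lemma sd1 (j : 'I_m) : (sp p)^`().[p`_j] = (Kp p j).[p`_j].
Proof.
by rewrite (sK p j) derivM derivXsubC mul1r hornerD hornerM hornerXsubC subrr mul0r addr0.
Qed.

Lemma Kd (j : 'I_m) : (Kp p j)^`().[p`_j] = (Kp p j).[p`_j] * \sum_(i < m | i != j) (p`_j - p`_i)^-1.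
Proof.
have := @LD R _ (index_enum 'I_m) (fun i => i != j) (fun i => p`_i) (fun _ => 1%N) (p`_j).
rewrite /Kp.
have E1 : forall (Pr : pred 'I_m), \prod_(i <- index_enum 'I_m | Pr i) ('X - (p`_i)%:P) ^+ 1
   = \prod_(i < m | Pr i) ('X - (p`_i)%:P) by move=> Pr; apply: eq_bigr => i _; rewrite expr1.
rewrite !E1.
under [in X in _ = _ * X]eq_bigr do rewrite div1r.
by apply=> i ij; apply/eqP => /dist E; move: ij; rewrite E eqxx.
Qed.

Lemma sd2 (j : 'I_m) : (sp p)^`()^`().[p`_j] =
   2 * (Kp p j).[p`_j] * \sum_(i < m | i != j) (p`_j - p`_i)^-1.
Proof.
rewrite (sK p j) !derivM derivXsubC mul1r derivD derivM derivXsubC mul1r.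
by rewrite !hornerE /= subrr !mul0r addr0 Kd; ring.
Qed.

Lemma Hp_off x : (forall i : 'I_m, x != p`_i) ->
  (Hp p).[x] = (sp p).[x] * \sum_(j < m) rr j / (x - p`_j).
Proof.
move=> Hx; rewrite /Hp horner_sum mulr_sumr; apply: eq_bigr => j _.
rewrite hornerZ (sK p j) hornerM hornerXsubC.
have : x - p`_j != 0 by rewrite subr_eq0 Hx.
by move=> h; field.
Qed.

Lemma F1 (P : {poly R}) : P = lead_coef P *: \prod_(i < m) ('X - (p`_i)%:P) ^+ (nth 0%N r i) ->
  P^`() * sp p = P * Hp p.
Proof.
move=> HP; apply/eqP; rewrite -subr_eq0; apply/eqP.
apply: (@poly_eq0_large R _ (\sum_(i < m) `|p`_i|)) => x Bx.
have Hx : forall i : 'I_m, x != p`_i.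
  move=> i; apply/eqP => E; move: Bx; rewrite E; apply/negP; rewrite -leNgt.
  apply: le_trans (ler_norm _) _.
  by rewrite (bigD1 i) //= lerDl sumr_ge0.
rewrite hornerD hornerN !hornerM Hp_off //.
rewrite {1}HP derivZ hornerZ LD; last by move=> i _; apply: Hx.
rewrite {2}HP hornerZ /rr; ring.
Qed.

End Main.

Lemma symZ (R : realFieldType) N (a q : nat -> R) :
  \sum_(i < N) \sum_(j < N | (i < j)%N) (a j - a i) / (q j - q i) =
  \sum_(j < N) a j * \sum_(i < N | i != j) (q j - q i)^-1.
Proof.
pose F (i j : 'I_N) := a j / (q j - q i).
have L : \sum_(i < N) \sum_(j < N | (i < j)%N) (a j - a i) / (q j - q i) =
   \sum_(i < N) \sum_(j < N) (if (i < j)%N then F i j else 0) +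
   \sum_(i < N) \sum_(j < N) (if (i < j)%N then F j i else 0).
  rewrite -big_split; apply: eq_bigr => i _; rewrite -big_split big_mkcond.
  apply: eq_bigr => j _ /=; case: ifP => _; last by rewrite addr0.
  by rewrite /F mulrBl -[q i - q j]opprB invrN mulrN.
have Rh : \sum_(j < N) a j * \sum_(i < N | i != j) (q j - q i)^-1 =
   \sum_(j < N) \sum_(i < N) (if (i < j)%N then F i j else 0) +
   \sum_(j < N) \sum_(i < N) (if (j < i)%N then F i j else 0).
  rewrite -big_split; apply: eq_bigr => j _; rewrite -big_split mulr_sumr big_mkcond.
  apply: eq_bigr => i _ /=; rewrite /F.
  case: (ltngtP i j) => h.
  - by rewrite ifT ?addr0 // neq_ltn h.
  - by rewrite ifT ?add0r // neq_ltn h orbT.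
  - by rewrite ifF ?addr0 //; apply/negbTE; rewrite negbK; apply/eqP/val_inj.
by rewrite L Rh exchange_big.
Qed.

Section Asm.
Variables (R : realFieldType) (n : nat) (r : seq nat).
Hypothesis rpos : all (fun k => (0 < k)%N) r.
Local Notation m := (size r).

Definition TT := ({poly R} * seq R)%type.
Definition valid (x : TT) :=
  [/\ size x.1 = n.+1, sorted <%R x.2, size x.2 = size r &
      x.1 = lead_coef x.1 *: \prod_(i < size x.2) ('X - (x.2`_i)%:P) ^+ (nth 0%N r i)].
Definition cv (x : TT) : 'I_n.+1 -> R := fun i => x.1`_i.

Local Notation Rat := (@RatOn R n.+1 TT valid cv).
Definition RatPoly (F : TT -> {poly R}) := forall i, Rat (fun x => (F x)`_i).

Lemma rat_nat f c : Rat f -> Rat (fun x => f x *+ c).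
Proof. move=> H; apply: rat_ext (rat_mul H (rat_cst valid cv c%:R)) _ => x _; by rewrite mulr_natr. Qed.

Lemma rp_P : RatPoly (fun x => x.1).
Proof.
move=> i; case: (ltnP i n.+1) => hi.
  by apply: rat_ext (rat_var valid cv (Ordinal hi)) _.
apply: rat_ext (rat_cst valid cv 0) _ => x [h1 _ _ _].
by rewrite nth_default // h1.
Qed.

Lemma rp_cst (c : {poly R}) : RatPoly (fun _ => c).
Proof. by move=> i; apply: rat_cst. Qed.

Lemma rp_add F G : RatPoly F -> RatPoly G -> RatPoly (fun x => F x + G x).
Proof. by move=> HF HG i; apply: rat_ext (rat_add (HF i) (HG i)) _ => x _; rewrite coefD. Qed.

Lemma rp_opp F : RatPoly F -> RatPoly (fun x => - F x).
Proof. by move=> HF i; apply: rat_ext (rat_opp (HF i)) _ => x _; rewrite coefN. Qed.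

Lemma rp_scale F c : RatPoly F -> RatPoly (fun x => c *: F x).
Proof. by move=> HF i; apply: rat_ext (rat_mul (rat_cst valid cv c) (HF i)) _ => x _; rewrite coefZ. Qed.

Lemma rp_mul F G : RatPoly F -> RatPoly G -> RatPoly (fun x => F x * G x).
Proof.
move=> HF HG i; apply: rat_ext (@rat_sum R n.+1 TT valid cv 'I_i.+1 (index_enum 'I_i.+1) xpredT
   (fun (j : 'I_i.+1) x => (F x)`_j * (G x)`_(i - j)) _) _.
  by move=> j; apply: rat_mul.
by move=> x _; rewrite coefM.
Qed.

Lemma rp_deriv F : RatPoly F -> RatPoly (fun x => (F x)^`()).
Proof. by move=> HF i; apply: rat_ext (rat_nat i.+1 (HF i.+1)) _ => x _; rewrite coef_deriv. Qed.

Lemma rp_ext F G : RatPoly F -> (forall x, valid x -> F x = G x) -> RatPoly G.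
Proof. by move=> HF E i; apply: rat_ext (HF i) _ => x vx; rewrite E. Qed.


Lemma v_uniq x : valid x -> uniq x.2.
Proof. by case=> _ h _ _; apply: lt_sorted_uniq. Qed.

Lemma v_dist x : valid x -> forall i j : 'I_m, x.2`_i = x.2`_j -> i = j.
Proof.
move=> vx i j E; apply/val_inj/eqP; have [_ _ hs _] := vx.
by rewrite -(nth_uniq 0 _ _ (v_uniq vx)) ?hs ?ltn_ord //; apply/eqP.
Qed.

Lemma v_P x : valid x ->
  x.1 = lead_coef x.1 *: \prod_(i < m) ('X - (x.2`_i)%:P) ^+ (nth 0%N r i).
Proof. by case=> _ _ hs; rewrite hs. Qed.

Lemma v_P0 x : valid x -> x.1 != 0.
Proof. by case=> h _ _ _; rewrite -size_poly_eq0 h. Qed.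

Lemma poly0_coefs N (q : {poly R}) : (size q <= N)%N ->
  (forall k : 'I_N, q`_k = 0) -> q = 0.
Proof.
move=> hs hk; apply/polyP => i; rewrite coef0; case: (ltnP i N) => hi.
  exact: (hk (Ordinal hi)).
by move/leq_sizeP: hs; apply.
Qed.

Lemma rowpolyM l' m' (Q : {poly R}) (v : 'rV[R]_m') :
  v *m \matrix_(t < m', k < l') (Q * 'X^t)`_k = \row_(k < l') (Q * rpoly v)`_k.
Proof. by apply/matrixP => a k; rewrite [a]ord1 rowpoly mxE. Qed.

Lemma size_Hp (p : seq R) : (size (Hp r p) <= m)%N.
Proof.
apply/leq_sizeP => j hj; rewrite /Hp coef_sum big1 // => i _.
by rewrite coefZ (leq_sizeP _ _ (eq_leq (size_Kp p i))) ?mulr0.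
Qed.

Lemma rpoly_monic (q : {poly R}) : size q = m.+1 -> q \is monic ->
  rpoly (\row_(t < m) q`_t) = q - 'X^m.
Proof.
move=> hs hm; apply/polyP => i; rewrite coefB coefXn.
case: (ltnP i m) => hi.
  by rewrite (coef_rpoly _ (Ordinal hi)) mxE (ltn_eqF hi) subr0.
rewrite (leq_sizeP _ _ (size_rpoly _)) //.
case: (ltngtP i m) => h; first by move: hi; rewrite leqNgt h.
  by rewrite nth_default ?hs // subr0.
rewrite h; have -> : q`_m = 1 by rewrite -(monicP hm) lead_coefE hs.
by rewrite subrr.
Qed.

Definition u1 (x : TT) : 'rV[R]_(m + m) :=
  row_mx (\row_(t < m) (sp r x.2)`_t) (\row_(t < m) (Hp r x.2)`_t).
Definition M1 (x : TT) : 'M[R]_(m + m, n + m) :=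
  col_mx (\matrix_(t < m, k < n + m) (x.1^`() * 'X^t)`_k)
         (\matrix_(t < m, k < n + m) ((- x.1) * 'X^t)`_k).
Definition b1 (x : TT) : 'rV[R]_(n + m) := \row_(k < n + m) (- (x.1^`() * 'X^m)`_k).

Lemma s1_eq x : valid x -> u1 x *m M1 x = b1 x.
Proof.
move=> vx; rewrite /u1 /M1 mul_row_col !rowpolyM.
rewrite (@rpoly_monic (sp r x.2)) ?size_sp ?sp_monic // (@rpoly_coefs _ _ (Hp r x.2)) ?size_Hp //.
apply/matrixP => a k; rewrite !mxE -coefD -coefN; apply: (congr1 (fun q : {poly R} => q`_k)).
rewrite mulrBr (F1 (v_P vx)); ring.
Qed.

Lemma size_deriv_le (q : {poly R}) : (size q^`() <= (size q).-1)%N.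
Proof.
apply/leq_sizeP => j hj; rewrite coef_deriv nth_default ?mul0rn //.
by case: (size q) hj => //= k hk; rewrite ltnS.
Qed.

Lemma s1_inj x : valid x -> forall v : 'rV[R]_(m + m), v *m M1 x = 0 -> v = 0.
Proof.
move=> vx v Hv; rewrite -(hsubmxK v) in Hv *.
move: Hv; set sg := lsubmx v; set et := rsubmx v => Hv.
rewrite /M1 mul_row_col !rowpolyM in Hv.
have E : x.1^`() * rpoly sg + (- x.1) * rpoly et = 0.
  apply: (@poly0_coefs (n + m)).
    apply: leq_trans (size_polyD _ _) _; rewrite geq_max; apply/andP; split.
      apply: leq_trans (size_polyMleq _ _) _.
      have := size_deriv_le x.1; have [h _ _ _] := vx; rewrite h /= => h1.
      by apply: leq_trans (leq_pred _) _; apply: leq_add => //; apply: size_rpoly.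
    apply: leq_trans (size_polyMleq _ _) _; rewrite size_polyN.
    have [h _ _ _] := vx; rewrite h addSn /=; apply: leq_add => //; apply: size_rpoly.
  by move=> k; have := congr1 (fun A : 'rV[R]_(n + m) => A ord0 k) Hv; rewrite !mxE coefD.
have E2 : x.1^`() * rpoly sg = x.1 * rpoly et.
  by apply/eqP; rewrite -subr_eq0 -mulNr; apply/eqP.
have E3 : Hp r x.2 * rpoly sg = sp r x.2 * rpoly et.
  apply: (mulfI (v_P0 vx)).
  by rewrite mulrA -(F1 (v_P vx)) mulrAC E2 mulrAC mulrA.
have sg0 : rpoly sg = 0.
  apply: (@roots_geq_poly_eq0 _ _ x.2); last 2 first.
  - exact: v_uniq vx.
  - by have [_ _ -> _] := vx; apply: size_rpoly.
  apply/(all_nthP 0) => j hj; have [_ _ hs _] := vx; rewrite hs in hj.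
  have E4 : (Hp r x.2 * rpoly sg).[x.2`_(Ordinal hj)] = (sp r x.2 * rpoly et).[x.2`_(Ordinal hj)].
    by rewrite E3.
  rewrite !hornerM sp_root mul0r in E4.
  change (root (rpoly sg) x.2`_(Ordinal hj)); apply/eqP.
  by move/eqP: E4; rewrite mulf_eq0 (negbTE (Hp_nz rpos (v_dist vx) _)) => /eqP.
have et0 : rpoly et = 0.
  by move: E2; rewrite sg0 mulr0 => /esym/eqP; rewrite mulf_eq0 (negbTE (v_P0 vx)) => /eqP.
by rewrite (rpoly_eq0 sg0) (rpoly_eq0 et0) row_mx0.
Qed.


Definition zz (p : seq R) (j : 'I_m) : R :=
  (@rr R r j)^-1 * \sum_(i < m | i != j) (p`_j - p`_i)^-1.
Definition Wp (p : seq R) := \sum_(j < m) zz p j *: Kp p j.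
Definition Tp (p : seq R) := 2^-1 *: ((sp r p)^`() * (sp r p)^`()^`()).
Definition Qp (p : seq R) := (Tp p - Wp p * Hp r p) %/ sp r p.

Lemma size_Wp (p : seq R) : (size (Wp p) <= m)%N.
Proof.
apply/leq_sizeP => j hj; rewrite /Wp coef_sum big1 // => i _.
by rewrite coefZ (leq_sizeP _ _ (eq_leq (size_Kp p i))) ?mulr0.
Qed.

Lemma Wp_at (p : seq R) (dist : forall i j : 'I_m, p`_i = p`_j -> i = j) (j : 'I_m) :
  (Wp p).[p`_j] = zz p j * (Kp p j).[p`_j].
Proof.
rewrite /Wp horner_sum (bigD1 j) //= hornerZ big1 ?addr0 // => i ij.
by rewrite hornerZ Kp_root ?mulr0.
Qed.

Lemma Tp_root (p : seq R) (dist : forall i j : 'I_m, p`_i = p`_j -> i = j) (j : 'I_m) :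
  (Tp p - Wp p * Hp r p).[p`_j] = 0.
Proof.
rewrite hornerD hornerN !hornerM hornerZ hornerM (sd1 p) (sd2 dist) (Wp_at dist) (Hp_at p).
rewrite /zz; have := @rr_nz R r rpos j; set a := @rr R r j => an0; field.
exact: an0.
Qed.

Lemma prod_sp x : valid x -> \prod_(z <- x.2) ('X - z%:P) = sp r x.2.
Proof.
case=> _ _ hs _; rewrite (big_nth 0) big_mkord /sp.
by rewrite hs.
Qed.

Lemma Tp_dec x : valid x -> Tp x.2 - Wp x.2 * Hp r x.2 = Qp x.2 * sp r x.2.
Proof.
move=> vx.
have [q Eq] : exists q, Tp x.2 - Wp x.2 * Hp r x.2 = q * \prod_(z <- x.2) ('X - z%:P).
  apply: uniq_roots_prod_XsubC; last by rewrite uniq_rootsE (v_uniq vx).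
  apply/(all_nthP 0) => j hj; have [_ _ hs _] := vx; rewrite hs in hj.
  change (root (Tp x.2 - Wp x.2 * Hp r x.2) x.2`_(Ordinal hj)).
  by apply/eqP; apply: Tp_root (v_dist vx) _.
rewrite (prod_sp vx) in Eq.
by rewrite /Qp Eq mulpK // monic_neq0 // sp_monic.
Qed.

Lemma size_sd (p : seq R) : (size (sp r p)^`() <= m)%N.
Proof. by have := size_deriv_le (sp r p); rewrite size_sp. Qed.

Lemma size_Qp x : valid x -> (size (Qp x.2) <= m)%N.
Proof.
move=> vx; have E := Tp_dec vx.
have hs : (size (Tp x.2 - Wp x.2 * Hp r x.2)%R <= m + m)%N.
  apply: leq_trans (size_polyD _ _) _; rewrite geq_max size_polyN; apply/andP; split.
    apply: leq_trans (size_scale_leq _ _) _.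
    apply: leq_trans (size_polyMleq _ _) _.
    apply: leq_trans (leq_pred _) _; apply: leq_add; first exact: size_sd.
    apply: leq_trans (size_deriv_le _) _; apply: leq_trans (leq_pred _) _; exact: size_sd.
  apply: leq_trans (size_polyMleq _ _) _; apply: leq_trans (leq_pred _) _.
  by apply: leq_add; [apply: size_Wp | apply: size_Hp].
have [->|Qn0] := eqVneq (Qp x.2) 0; first by rewrite size_poly0.
move: hs; rewrite E size_Mmonic ?sp_monic // size_sp addnS /=.
by rewrite leq_add2r.
Qed.

Definition u2 (x : TT) : 'rV[R]_(m + m) :=
  row_mx (\row_(t < m) (Wp x.2)`_t) (\row_(t < m) (Qp x.2)`_t).
Definition M2 (x : TT) : 'M[R]_(m + m, m + m) :=
  col_mx (\matrix_(t < m, k < m + m) (Hp r x.2 * 'X^t)`_k)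
         (\matrix_(t < m, k < m + m) (sp r x.2 * 'X^t)`_k).
Definition b2 (x : TT) : 'rV[R]_(m + m) := \row_(k < m + m) (Tp x.2)`_k.

Lemma s2_eq x : valid x -> u2 x *m M2 x = b2 x.
Proof.
move=> vx; rewrite /u2 /M2 mul_row_col !rowpolyM.
rewrite (@rpoly_coefs _ _ (Wp x.2)) ?size_Wp // (@rpoly_coefs _ _ (Qp x.2)) ?size_Qp //.
apply/matrixP => a k; rewrite !mxE -coefD; apply: (congr1 (fun q : {poly R} => q`_k)).
have := Tp_dec vx; move/eqP; rewrite subr_eq => /eqP ->; ring.
Qed.

Lemma s2_inj x : valid x -> forall v : 'rV[R]_(m + m), v *m M2 x = 0 -> v = 0.
Proof.
move=> vx v Hv; rewrite -(hsubmxK v) in Hv *.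
move: Hv; set sg := lsubmx v; set et := rsubmx v => Hv.
rewrite /M2 mul_row_col !rowpolyM in Hv.
have E : Hp r x.2 * rpoly sg + sp r x.2 * rpoly et = 0.
  apply: (@poly0_coefs (m + m)).
    apply: leq_trans (size_polyD _ _) _; rewrite geq_max; apply/andP; split.
      apply: leq_trans (size_polyMleq _ _) _; apply: leq_trans (leq_pred _) _.
      by apply: leq_add; [apply: size_Hp | apply: size_rpoly].
    apply: leq_trans (size_polyMleq _ _) _; rewrite size_sp addSn /=.
    by apply: leq_add => //; apply: size_rpoly.
  by move=> k; have := congr1 (fun A : 'rV[R]_(m + m) => A ord0 k) Hv; rewrite !mxE coefD.
have sg0 : rpoly sg = 0.
  apply: (@roots_geq_poly_eq0 _ _ x.2); last 2 first.
  - exact: v_uniq vx.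
  - by have [_ _ -> _] := vx; apply: size_rpoly.
  apply/(all_nthP 0) => j hj; have [_ _ hs _] := vx; rewrite hs in hj.
  have E4 : (Hp r x.2 * rpoly sg + sp r x.2 * rpoly et).[x.2`_(Ordinal hj)] = 0.
    by rewrite E horner0.
  rewrite hornerD !hornerM sp_root mul0r addr0 in E4.
  change (root (rpoly sg) x.2`_(Ordinal hj)); apply/eqP.
  by move/eqP: E4; rewrite mulf_eq0 (negbTE (Hp_nz rpos (v_dist vx) _)) => /eqP.
have et0 : rpoly et = 0.
  move: E; rewrite sg0 mulr0 add0r => /eqP; rewrite mulf_eq0 (negbTE (monic_neq0 (sp_monic r x.2))) /=.
  by move/eqP.
by rewrite (rpoly_eq0 sg0) (rpoly_eq0 et0) row_mx0.
Qed.


Lemma rat_colmx a b c (A : TT -> 'M[R]_(a, c)) (B : TT -> 'M[R]_(b, c)) :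
  (forall i j, Rat (fun x => A x i j)) -> (forall i j, Rat (fun x => B x i j)) ->
  forall i j, Rat (fun x => col_mx (A x) (B x) i j).
Proof.
move=> HA HB i j; case: (splitP i) => [i1 e | i2 e].
  have -> : i = lshift b i1 by apply: val_inj.
  by apply: rat_ext (HA i1 j) _ => x _; rewrite col_mxEu.
have -> : i = rshift a i2 by apply: val_inj.
by apply: rat_ext (HB i2 j) _ => x _; rewrite col_mxEd.
Qed.

Lemma rat_mat a c (F : 'I_a -> TT -> {poly R}) :
  (forall t, RatPoly (F t)) ->
  forall i (j : 'I_c), Rat (fun x => (\matrix_(t < a, k < c) (F t x)`_k) i j).
Proof. by move=> HF i j; apply: rat_ext (HF i j) _ => x _; rewrite mxE. Qed.

Lemma rat_row c (F : TT -> {poly R}) : RatPoly F ->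
  forall j, Rat (fun x => (\row_(k < c) (F x)`_k) ord0 j).
Proof. by move=> HF j; apply: rat_ext (HF j) _ => x _; rewrite mxE. Qed.

Lemma rat_u1 : forall i, Rat (fun x => u1 x ord0 i).
Proof.
apply: (@rat_solve R n.+1 TT valid cv (m + m) (n + m) M1 b1 u1).
- apply: rat_colmx; apply: rat_mat => t.
    by apply: rp_mul; [apply: rp_deriv; apply: rp_P | apply: rp_cst].
  by apply: rp_mul; [apply: rp_opp; apply: rp_P | apply: rp_cst].
- move=> j; apply: rat_ext (rat_opp (rat_row (F := fun x => x.1^`() * 'X^m) _ j)) _.
    by apply: rp_mul; [apply: rp_deriv; apply: rp_P | apply: rp_cst].
  by move=> x _; rewrite !mxE.
- exact: s1_eq.
- exact: s1_inj.
Qed.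

Lemma rp_s : RatPoly (fun x => sp r x.2).
Proof.
move=> t; case: (ltnP t m) => ht.
  apply: rat_ext (rat_u1 (lshift m (Ordinal ht))) _ => x _.
  by rewrite /u1 row_mxEl mxE.
case: (ltngtP t m) => h; first by move: ht; rewrite leqNgt h.
  apply: rat_ext (rat_cst valid cv 0) _ => x _.
  by rewrite nth_default // size_sp.
apply: rat_ext (rat_cst valid cv 1) _ => x _.
by rewrite h -(monicP (sp_monic r x.2)) lead_coefE size_sp.
Qed.

Lemma rp_H : RatPoly (fun x => Hp r x.2).
Proof.
move=> t; case: (ltnP t m) => ht.
  apply: rat_ext (rat_u1 (rshift m (Ordinal ht))) _ => x _.
  by rewrite /u1 row_mxEr mxE.
apply: rat_ext (rat_cst valid cv 0) _ => x _.
by rewrite (leq_sizeP _ _ (size_Hp _)).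
Qed.

Lemma rat_u2 : forall i, Rat (fun x => u2 x ord0 i).
Proof.
apply: (@rat_solve R n.+1 TT valid cv (m + m) (m + m) M2 b2 u2).
- apply: rat_colmx; apply: rat_mat => t.
    by apply: rp_mul; [apply: rp_H | apply: rp_cst].
  by apply: rp_mul; [apply: rp_s | apply: rp_cst].
- apply: rat_row; apply: rp_scale; apply: rp_mul; apply: rp_deriv; first exact: rp_s.
  by apply: rp_deriv; apply: rp_s.
- exact: s2_eq.
- exact: s2_inj.
Qed.

Lemma rp_W : RatPoly (fun x => Wp x.2).
Proof.
move=> t; case: (ltnP t m) => ht.
  apply: rat_ext (rat_u2 (lshift m (Ordinal ht))) _ => x _.
  by rewrite /u2 row_mxEl mxE.
apply: rat_ext (rat_cst valid cv 0) _ => x _.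
by rewrite (leq_sizeP _ _ (size_Wp _)).
Qed.

Lemma Wp_top (p : seq R) : (Wp p)`_(m.-1) = \sum_(j < m) zz p j.
Proof.
rewrite /Wp coef_sum; apply: eq_bigr => j _; rewrite coefZ.
by rewrite -(size_Kp p j) -lead_coefE (monicP (Kp_monic p j)) mulr1.
Qed.

Lemma rat_Z : Rat (fun x => \sum_(i < size x.2) \sum_(j < size x.2 | (i < j)%N)
     (((nth 0%N r j)%:R)^-1 - ((nth 0%N r i)%:R)^-1) / (x.2`_j - x.2`_i)).
Proof.
apply: rat_ext (rp_W m.-1) _ => x [_ _ hs _].
rewrite Wp_top (symZ (size x.2) (fun j => ((nth 0%N r j)%:R)^-1) (fun j => x.2`_j)) hs.
by apply: eq_bigr => j _.
Qed.

End Asm.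

Unset Implicit Arguments.

Theorem corollary3 (R : realType) (n : nat) (r : seq nat) :
  all (fun k => (0 < k)%N) r -> sumn r = n ->
  exists N D : {mpoly R[n.+1]},
    forall (P : {poly R}) (p : seq R),
      size P = n.+1 ->
      sorted <%R p -> size p = size r ->
      P = lead_coef P *: \prod_(i < size p) ('X - (p`_i)%:P) ^+ (nth 0%N r i) ->
      D.@[coefvec n P] != 0 /\
      Zsum p r = N.@[coefvec n P] / D.@[coefvec n P].
Proof.
move=> rpos _.
have [N [D H]] := @rat_Z R n r rpos.
exists N, D => P p h1 h2 h3 h4.
have vx : valid n r (P, p) by split.
exact: (H (P, p) vx).
Qed.
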